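(* Let $G$ be a compact group with Haar probability measure $\lambda$, let $\mathcal E$ be a finite partition of $G$ into Borel sets and let $y\in G$. Define, for $D\in Bor(G\times G)$, $$\nu_{y,\mathcal E}(D)=\sum_{E\in\mathcal E^\ast}\frac{\lambda_2\big(D\cap(E\times(E\oplus y))\big)}{\lambda(E)}.$$ Then $\nu_{y,\mathcal E}\in P(G\times G)$ and $\nu_{y,\mathcal E}(B\times G)=\nu_{y,\mathcal E}(G\times B)=\lambda(B)$ for every Borel set $B\subseteq G$.
   Context: $G=(G,\oplus)$ is a compact Hausdorff group (written additively but not necessarily commutative), $\lambda$ its (two-sided invariant) Haar probability measure, and $E\oplus y=\{e\oplus y: e\in E\}$. $\lambda_2$ is the product measure $\lambda\otimes\lambda$ on $G\times G$, extended uniquely to a regular Borel probability measure. $\mathcal E^\ast$ is the set of $E\in\mathcal E$ with $\lambda(E)>0$. $P(X)$ denotes the set of regular Borel probability measures on a compact space $X$. *)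

(* Defs.v *)
From HB Require Import structures.
From mathcomp Require Import all_boot all_order all_algebra.
From mathcomp Require Import all_classical all_reals all_analysis.
Set Implicit Arguments. Unset Strict Implicit. Unset Printing Implicit Defensive.
Import Order.TTheory GRing.Theory Num.Theory.
Local Open Scope classical_set_scope.
Local Open Scope ring_scope.

Notation borelT T := (g_sigma_algebraType (@open T)).

Definition regular_measure (R : realType) (T : topologicalType)
  (mu : set T -> \bar R) : Prop :=
  forall D : set T, <<s (@open T) >> D ->
    mu D = ereal_sup [set mu K | K in [set K : set T | compact K /\ K `<=` D]]
    /\ mu D = ereal_inf [set mu U | U in [set U : set T | open U /\ D `<=` U]].

Definition compact_group (G : ptopologicalType)
  (add : G -> G -> G) (opp : G -> G) (zero : G) : Prop :=
  [/\ associative add /\ left_id zero add /\ right_id zero add,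
      (forall x, add (opp x) x = zero) /\ (forall x, add x (opp x) = zero),
      continuous (fun p : G * G => add p.1 p.2) /\ continuous opp,
      hausdorff_space G & compact [set: G]].

Definition haar_prob (R : realType) (G : ptopologicalType)
  (add : G -> G -> G) (lam : probability (borelT G) R) : Prop :=
  regular_measure (fun A : set G => lam A) /\
  forall (A : set (borelT G)) (x : G), measurable A ->
    lam [set add x a | a in A] = lam A /\ lam [set add a x | a in A] = lam A.

Definition haar_prod (R : realType) (G : ptopologicalType)
  (lam : probability (borelT G) R) (lam2 : probability (borelT (G * G)%type) R) : Prop :=
  regular_measure (fun D : set (G * G) => lam2 D) /\
  forall (A B : set (borelT G)), measurable A -> measurable B ->
    lam2 (A `*` B) = (lam A * lam B)%E.

Definition borel_partition (G : ptopologicalType) (n : nat) (E : 'I_n -> set (borelT G)) : Prop :=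
  (forall i, measurable (E i)) /\
  (forall i j, i != j -> E i `&` E j = set0) /\
  \bigcup_(i in [set: 'I_n]) E i = [set: G].

Definition nu_yE (R : realType) (G : ptopologicalType) (add : G -> G -> G)
  (lam : probability (borelT G) R) (lam2 : probability (borelT (G * G)%type) R)
  (n : nat) (E : 'I_n -> set (borelT G)) (y : G) (D : set (borelT (G * G)%type)) : \bar R :=
  (\sum_(i < n | (0 < lam (E i))%E)
     (lam2 (D `&` (E i `*` [set add e y | e in E i])) * ((fine (lam (E i)))^-1)%:E))%E.

(* Main.v *)
Require Import Defs.
From HB Require Import structures.
From mathcomp Require Import all_boot all_order all_algebra.
From mathcomp Require Import all_classical all_reals all_analysis.
From mathcomp Require Import lra.
Import Order.TTheory GRing.Theory Num.Theory.
Local Open Scope classical_set_scope.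
Local Open Scope ring_scope.
Set Implicit Arguments. Unset Strict Implicit. Unset Printing Implicit Defensive.

Lemma fst_cont (T U : topologicalType) : continuous (@fst T U).
Proof. move=> p; exact: cvg_fst. Qed.
Lemma snd_cont (T U : topologicalType) : continuous (@snd T U).
Proof. move=> p; exact: cvg_snd. Qed.

Lemma pair_cont (T U : topologicalType) (y : U) : continuous (fun x : T => (x, y)).
Proof. move=> x; apply: cvg_pair => //=; exact: cvg_cst. Qed.

Lemma borel_preimage (T U : topologicalType) (f : T -> U) : continuous f ->
  forall B : set U, <<s (@open U) >> B -> <<s (@open T) >> (f @^-1` B).
Proof.
move=> cf B hB.
have := @smallest_sub _ (sigma_algebra setT) (@open U)
  (image_set_system setT f <<s (@open T)>>).
move=> /(_ _ _ B hB); rewrite /image_set_system /= setTI; apply.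
  apply: sigma_algebra_image; exact: smallest_sigma_algebra.
move=> A oA /=; rewrite setTI; apply: sub_sigma_algebra.
by move/continuousP : cf; apply.
Qed.

Lemma prod_hausdorff (T U : topologicalType) : hausdorff_space T -> hausdorff_space U ->
  hausdorff_space (T * U)%type.
Proof.
move=> hT hU [p1 p2] [q1 q2] cl.
have c1 : cluster (nbhs p1) q1.
  move=> A B nA nB.
  have nA' : nbhs (p1, p2) (fst @^-1` A) by exact: fst_cont.
  have nB' : nbhs (q1, q2) (fst @^-1` B) by exact: fst_cont.
  have [[a b] [/= ? ?]] := cl _ _ nA' nB'; by exists a.
have c2 : cluster (nbhs p2) q2.
  move=> A B nA nB.
  have nA' : nbhs (p1, p2) (snd @^-1` A) by exact: snd_cont.
  have nB' : nbhs (q1, q2) (snd @^-1` B) by exact: snd_cont.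
  have [[a b] [/= ? ?]] := cl _ _ nA' nB'; by exists b.
by rewrite (hT _ _ c1) (hU _ _ c2).
Qed.

Lemma compact_borel (T : topologicalType) (K : set T) : hausdorff_space T -> compact K ->
  <<s (@open T) >> K.
Proof.
move=> hT cK; rewrite -(setCK K) -setTD; apply: sigma_algebraCD; apply: sub_sigma_algebra.
apply: closed_openC; exact: compact_closed.
Qed.

Lemma setX_borel (T U : ptopologicalType) (A : set T) (B : set U) :
  <<s (@open T) >> A -> <<s (@open U) >> B -> <<s (@open (T * U)%type) >> (A `*` B).
Proof.
move=> mA mB.
have -> : A `*` B = (fst @^-1` A) `&` (snd @^-1` B) by [].
have h1 := @borel_preimage (T * U)%type T fst (@fst_cont T U) A mA.
have h2 := @borel_preimage (T * U)%type U snd (@snd_cont T U) B mB.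
exact: (@measurableI _ (borelT (T * U)%type) _ _ h1 h2).
Qed.

Lemma regular_transfer (R : realType) (T U : ptopologicalType)
  (mu nu : {measure set (borelT (T * U)%type) -> \bar R}) (c : R) :
  hausdorff_space T -> hausdorff_space U -> (mu setT < +oo)%E -> 0 <= c ->
  (forall Z : set (borelT (T * U)%type), measurable Z -> (nu Z <= c%:E * mu Z)%E) ->
  regular_measure (fun D : set (T * U) => mu D) ->
  regular_measure (fun D : set (T * U) => nu D).
Proof.
move=> hT hU muoo c0 nule reg D hD.
have hX := prod_hausdorff hT hU.
have mD : measurable (D : set (borelT (T * U)%type)) := hD.
have muf Z : measurable (Z : set (borelT (T * U)%type)) -> mu Z = (fine (mu Z))%:E.
  move=> mZ; rewrite fineK// ge0_fin_numE//.
  apply: le_lt_trans muoo; apply: le_measure => //; rewrite inE //.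
have nuf Z : measurable (Z : set (borelT (T * U)%type)) -> nu Z = (fine (nu Z))%:E.
  move=> mZ; rewrite fineK// ge0_fin_numE//.
  apply: le_lt_trans (nule _ mZ) _; rewrite muf// -EFinM; exact: ltey.
have [regs regi] := reg D hD.
have cp : 0 < c + 1 by lra.
split.
- apply/eqP; rewrite eq_le; apply/andP; split; last first.
    apply: ge_ereal_sup => _ [K [cK KD] <-].
    apply: le_measure => //; rewrite inE //; exact: compact_borel.
  apply/lee_addgt0Pr => e e0.
  have e'0 : 0 < e / (c + 1) by apply: divr_gt0.
  have sf : ereal_sup [set mu K | K in [set K : set (T * U) | compact K /\ K `<=` D]]
      \is a fin_num by rewrite -regs muf.
  have [x [K [cK KD] <-]] := ub_ereal_sup_adherent e'0 sf.
  rewrite -regs => hK.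
  have mK : measurable (K : set (borelT (T * U)%type)) by exact: compact_borel.
  have mDK : measurable (D `\` K : set (borelT (T * U)%type)) by exact: measurableD.
  have DKK : D `&` K = K by apply/setIidr.
  have h1 : (nu D = nu (D `\` K) + nu K)%E.
    by have := measureDI nu mD mK; rewrite DKK; exact.
  have h2 : (mu D = mu (D `\` K) + mu K)%E.
    by have := measureDI mu mD mK; rewrite DKK; exact.
  have h3 := nule _ mDK.
  have h4 : (nu K <= ereal_sup [set nu K | K in [set K : set (T * U) | compact K /\ K `<=` D]])%E.
    by apply: ereal_sup_ubound; exists K.
  apply: le_trans (leeD2r _ h4).
  rewrite (nuf _ mK) (nuf _ mDK) -EFinD in h1.
  rewrite (muf _ mK) (muf _ mDK) -EFinD in h2.
  rewrite (nuf _ mDK) (muf _ mDK) -EFinM lee_fin in h3.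
  rewrite h2 (muf _ mK) -EFinB lte_fin in hK.
  rewrite h1 (nuf _ mK) -EFinD lee_fin.
  have ee : e / (c + 1) * (c + 1) = e by rewrite divfK // gt_eqF.
  set a := e / (c + 1) in e'0 ee hK *.
  have : c * fine (mu (D `\` K)) <= c * a.
    apply: ler_wpM2l => //; lra.
  nra.
apply/eqP; rewrite eq_le; apply/andP; split.
  apply: le_ereal_inf_tmp => _ [V [oV DV] <-].
  apply: le_measure => //; rewrite inE //; exact: sub_sigma_algebra.
apply/lee_addgt0Pr => e e0.
have e'0 : 0 < e / (c + 1) by apply: divr_gt0.
have sf : ereal_inf [set mu V | V in [set V : set (T * U) | open V /\ D `<=` V]]
    \is a fin_num by rewrite -regi muf.
have [x [V [oV DV] <-]] := lb_ereal_inf_adherent e'0 sf.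
rewrite -regi => hV.
have mV : measurable (V : set (borelT (T * U)%type)) by exact: sub_sigma_algebra.
have mVD : measurable (V `\` D : set (borelT (T * U)%type)) by exact: measurableD.
have VDD : V `&` D = D by apply/setIidr.
have h1 : (nu V = nu (V `\` D) + nu D)%E.
  by have := measureDI nu mV mD; rewrite VDD; exact.
have h2 : (mu V = mu (V `\` D) + mu D)%E.
  by have := measureDI mu mV mD; rewrite VDD; exact.
have h3 := nule _ mVD.
have h4 : (ereal_inf [set nu V | V in [set V : set (T * U) | open V /\ D `<=` V]] <= nu V)%E.
  by apply: ereal_inf_lbound; exists V.
apply: le_trans h4 _.
rewrite (nuf _ mD) (nuf _ mVD) -EFinD in h1.
rewrite (muf _ mD) (muf _ mVD) -EFinD in h2.
rewrite (nuf _ mVD) (muf _ mVD) -EFinM lee_fin in h3.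
rewrite h2 (muf _ mD) -EFinD lte_fin in hV.
rewrite h1 (nuf _ mD) -EFinD lee_fin.
have ee : e / (c + 1) * (c + 1) = e by rewrite divfK // gt_eqF.
set a := e / (c + 1) in e'0 ee hV *.
have : c * fine (mu (V `\` D)) <= c * a.
  apply: ler_wpM2l => //; lra.
nra.
Qed.

Lemma part_sum (R : realType) d (T : measurableType d) (mu : {measure set T -> \bar R})
  n (F : 'I_n -> set T) :
  (forall i, measurable (F i)) -> (forall i j, i != j -> F i `&` F j = set0) ->
  (forall x, exists i, F i x) ->
  forall B, measurable B -> mu B = (\sum_(i < n) mu (B `&` F i))%E.
Proof.
move=> mF dF cF B mB.
have eqB : \big[setU/set0]_(i < n) (B `&` F i) = B.
  apply/seteqP; split.
    elim/big_ind: _ => [|X Y XB YB|i _]; first exact: sub0set.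
      by move=> x [/XB|/YB].
    by move=> x [].
  move=> x Bx; have [i Fi] := cF x; rewrite (bigD1 i) //=; by left.
rewrite -{1}eqB measure_semi_additive_ord //.
- by move=> k; exact: measurableI.
- move=> i j _ _ [x [[_ Fi] [_ Fj]]]; apply/eqP; apply/negPn/negP => /dF ij.
  by have : (F i `&` F j) x by []; rewrite ij.
- by rewrite eqB.
Qed.

Theorem lemma3p2 (R : realType) (G : ptopologicalType)
  (add : G -> G -> G) (opp : G -> G) (zero : G)
  (lam : probability (borelT G) R) (lam2 : probability (borelT (G * G)%type) R)
  (n : nat) (E : 'I_n -> set (borelT G)) (y : G) :
  compact_group add opp zero ->
  haar_prob add lam ->
  haar_prod lam lam2 ->
  borel_partition E ->
  (exists P : probability (borelT (G * G)%type) R,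
     regular_measure (fun D : set (G * G) => P D) /\
     forall D : set (borelT (G * G)%type), measurable D -> P D = nu_yE add lam lam2 E y D)
  /\ forall B : set (borelT G), measurable B ->
       nu_yE add lam lam2 E y (B `*` [set: G]) = lam B /\
       nu_yE add lam lam2 E y ([set: G] `*` B) = lam B.
Proof.
move=> [[assoc [lid rid]] [invl invr] [cadd copp] hG cpt] [_ haar] [reg2 prod]
  [mE [dE cE]].
pose Ey i : set G := [set add e y | e in E i].
have EyE i : Ey i = (fun x => add x (opp y)) @^-1` E i.
  apply/seteqP; split => [_ [e Ee <-]|x /= Ex] /=.
    by rewrite -assoc invr rid.
  by exists (add x (opp y)) => //; rewrite -assoc invl rid.
have ctr : continuous (fun x : G => add x (opp y)).
  move=> x; apply: (continuous_comp (f := fun x : G => (x, opp y))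
    (g := fun p : G * G => add p.1 p.2)); [exact: pair_cont | exact: cadd].
have mEy i : measurable (Ey i : set (borelT G)).
  rewrite EyE; exact: (borel_preimage ctr (mE i)).
have mA i : measurable (E i `*` Ey i : set (borelT (G * G)%type)).
  exact: setX_borel (mE i) (mEy i).
have lamEy i : lam (Ey i) = lam (E i) := (haar (E i) y (mE i)).2.
pose c i := fine (lam (E i)).
have lamf (A : set (borelT G)) : measurable A -> lam A = (fine (lam A))%:E.
  move=> mA'; rewrite fineK // ge0_fin_numE //.
  apply: (le_lt_trans (probability_le1 lam mA')); exact: ltey.
pose s i : R := if (0 < lam (E i))%E then (c i)^-1 else 0.
have s0 i : 0 <= s i.
  by rewrite /s; case: ifP => // _; rewrite invr_ge0 fine_ge0.
pose mk (k : nat) : {measure set (borelT (G * G)%type) -> \bar R} :=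
  match @insub _ _ 'I_n k with
  | Some i => mscale (NngNum (s0 i)) (mrestr lam2 (mA i))
  | None => mzero end.
pose m := msum mk n.
have mnu Z : m Z = nu_yE add lam lam2 E y Z.
  rewrite /= /msum /nu_yE big_mkcond /=; apply: eq_bigr => i _.
  rewrite /mk valK /= /mscale /mrestr /s /=; case: ifP => _.
    by rewrite muleC.
  by rewrite mul0e.
have zsub (A X : set (borelT G)) : measurable A -> measurable X -> X `<=` A ->
    ~~ (0 < lam A)%E -> lam X = 0%E.
  move=> mA' mX XA; rewrite lt0e measure_ge0 andbT negbK => /eqP A0.
  apply/eqP; rewrite eq_le measure_ge0 andbT -A0.
  by apply: le_measure => //; rewrite inE.
have cov x : exists i, E i x.
  have : [set: G] x by [].
  by rewrite -cE => -[i _ Ei]; exists i.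
have covy x : exists i, Ey i x.
  have [i Ei] := cov (add x (opp y)); exists i; by rewrite EyE.
have dEy i j : i != j -> Ey i `&` Ey j = set0.
  by move=> ij; rewrite !EyE -preimage_setI dE // preimage_set0.
have cancel_pos i X : (0 < lam (E i))%E ->
    (X * lam (E i) * ((fine (lam (E i)))^-1)%:E = X)%E.
  move=> pos; rewrite (lamf _ (mE i)) -muleA -EFinM divff ?mule1 //.
  apply: lt0r_neq0; by rewrite -lte_fin -(lamf _ (mE i)).
have marg1 (B : set (borelT G)) : measurable B ->
    nu_yE add lam lam2 E y (B `*` [set: G]) = lam B.
  move=> mB; rewrite (part_sum lam mE dE cov mB) /nu_yE big_mkcond /=.
  apply: eq_bigr => i _.
  have -> : (B `*` [set: G]) `&` (E i `*` [set add e y | e in E i])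
      = (B `&` E i) `*` Ey i.
    by apply/seteqP; split => -[a b] /=; tauto.
  rewrite prod //; last exact: measurableI.
  case: ifP => pos.
    by rewrite -/(Ey i) lamEy cancel_pos.
  symmetry; apply: (zsub (E i)); [exact: mE | exact: measurableI | by move=> x [] | by rewrite pos].
have marg2 (B : set (borelT G)) : measurable B ->
    nu_yE add lam lam2 E y ([set: G] `*` B) = lam B.
  move=> mB; rewrite (part_sum lam mEy dEy covy mB) /nu_yE big_mkcond /=.
  apply: eq_bigr => i _.
  have -> : ([set: G] `*` B) `&` (E i `*` [set add e y | e in E i])
      = E i `*` (B `&` Ey i).
    by apply/seteqP; split => -[a b] /=; tauto.
  rewrite prod //; last exact: measurableI.
  case: ifP => pos.
    by rewrite (muleC (lam (E i))) cancel_pos.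
  symmetry; apply: (zsub (Ey i)); [exact: mEy | exact: measurableI | by move=> x [] | by rewrite lamEy pos].
split; last by move=> B mB; split; [exact: marg1 | exact: marg2].
have m1 : m [set: borelT (G * G)%type] = 1%E.
  have -> : [set: borelT (G * G)%type] = [set: G] `*` [set: G] by rewrite setXTT.
  rewrite mnu marg1 ?probability_setT //; exact: measurableT.
have PE (Z : set (borelT (G * G)%type)) : mnormalize m lam2 Z = m Z.
  rewrite /mnormalize /=; move: m1; rewrite /m => m1; rewrite m1 onee_eq0 /= invr1 mule1 //.
exists (mnormalize m lam2); split; last by move=> D mD; rewrite -mnu; exact: PE.
have fin2 : (lam2 [set: borelT (G * G)%type] < +oo)%E.
  by rewrite probability_setT ltey.
have := @regular_transfer R G G lam2 (mnormalize m lam2) (\sum_(i < n) s i) hG hG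
  fin2 (sumr_ge0 _ (fun i _ => s0 i)).
apply => // Z mZ; apply: (@le_trans _ _ (m Z)).
  by rewrite le_eqVlt; apply/orP; left; apply/eqP; exact: PE.
rewrite /m /msum /=.
rewrite -sumEFin ge0_sume_distrl; last by move=> i _; rewrite lee_fin.
apply: lee_sum => i _.
rewrite /mk valK /= /mscale /mrestr /=.
apply: lee_wpmul2l; first by rewrite lee_fin.
apply: le_measure; rewrite ?inE //; exact: measurableI.
Qed.
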